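(* Let $0\le b<d\le n$ be integers and fix a homological degree. (1) If $\hat z$ is a relative cycle of $\hat K(b,d]$ that contains $\tau\times\{d\}$ with $\min\tau=d$ and whose boundary contains $\sigma\times\{b\}$ with $\min\sigma=b$, then $[\hat z]$ lies neither in the image of $H(\hat K(b-1,d])$ nor in the image of $H(\hat K(b,d-1])$ in $H(\hat K(b,d])$ (i.e. $\hat z$ is an apex representative). (2) If $\hat z$ is a relative cycle of $\hat K[b,d)$ that contains $\tau\times\{b\}$ with $\max\tau=b$ and whose boundary contains $\sigma\times\{d\}$ with $\max\sigma=d$, then $[\hat z]$ lies neither in the image of $H(\hat K[b+1,d))$ nor in the image of $H(\hat K[b,d+1))$ in $H(\hat K[b,d))$. (3) If $\hat z$ is a cycle of $\hat K[b,d]$ that contains $\sigma\times\{b\}$ and $\tau\times\{d\}$ with $\max\sigma=b$ and $\min\tau=d$, then $[\hat z]$ lies neither in the image of $H(\hat K[b+1,d])$ nor in the image of $H(\hat K[b,d-1])$ in $H(\hat K[b,d])$. (4) If $\hat z$ is a relative cycle of $\hat K(b,d)$ whose boundary contains $\sigma\times\{b\}$ with $\min\sigma=b$ and $\tau\times\{d\}$ with $\max\tau=d$, then $[\hat z]$ lies neither in the image of $H(\hat K(b-1,d))$ nor in the image of $H(\hat K(b,d+1))$ in $H(\hat K(b,d))$.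
   Context: Fix a field $\mathbb F$; all chains and homology groups have coefficients in $\mathbb F$. Let $n\ge 1$ and let $K$ be a finite $\Delta$-complex (distinct simplices may have the same boundary) in which every simplex $\sigma$ carries an integer interval $T(\sigma)=[\min\sigma,\max\sigma]\subseteq[0,n]$ with $\min\sigma<\max\sigma$, such that for each integer $i$ the set $K_i=\{\sigma: i\in T(\sigma)\}$ is a subcomplex (these form a zigzag $K_0\to K_1\leftarrow K_2\to\cdots$), and such that whenever $\sigma$ is a proper face of $\tau$ we have $\min\sigma<\min\tau<\max\tau<\max\sigma$. The prism $\hat K$ is the cell complex whose cells are the vertical cells $\sigma\times\{i\}$ for $\sigma\in K$ and integers $i\in T(\sigma)$ (of dimension $\dim\sigma$) and the horizontal cells $\sigma\times[i,i+1]$ for integers $i$ with $[i,i+1]\subseteq T(\sigma)$ (of dimension $\dim\sigma+1$), with boundary $\partial(\sigma\times\{i\})=(\partial\sigma)\times\{i\}$ and $\partial(\sigma\times[i,i+1])=(\partial\sigma)\times[i,i+1]+(-1)^{\dim\sigma}(\sigma\times\{i+1\}-\sigma\times\{i\})$ (terms not in $\hat K$ do not occur). For integers $i\le j$, $\hat K_i^j$ is the subcomplex of cells $\sigma\times T$ with $T\subseteq[i,j]$; so $\hat K_{-1}^{n+1}=\hat K$. For integers $b\le d$ define the pairs $\hat K[b,d]=(\hat K_b^d,\emptyset)$, $\hat K(b,d]=(\hat K_{-1}^d,\hat K_{-1}^b)$, $\hat K[b,d)=(\hat K_b^{n+1},\hat K_d^{n+1})$, $\hat K(b,d)=(\hat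 K,\hat K_{-1}^b\cup\hat K_d^{n+1})$, and write $H(\cdot)$ for their relative homology; maps between these groups are induced by inclusions of pairs. A relative cycle of a pair $(X,A)$ is a chain in $X$ whose boundary lies in $A$. A chain ''contains'' a cell if the cell's coefficient is nonzero. *)

(* Defs.v *)
From HB Require Import structures.
From mathcomp Require Import all_boot all_order all_algebra.
Set Implicit Arguments. Unset Strict Implicit. Unset Printing Implicit Defensive.
Import GRing.Theory Num.Theory.
Local Open Scope ring_scope.

(** Data of a finite Delta-complex K with interval labels T(s) = [tmin s, tmax s]
    inside [0,n].  [face s j] is the j-th face d_j s (meaningful for
    0 < sdim s and j <= sdim s). *)
Record dcx (n : nat) := DCx {
  simp : finType;
  sdim : simp -> nat;
  face : simp -> nat -> simp;
  tmin : simp -> nat;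
  tmax : simp -> nat }.

Section Defs.
Variables (F : fieldType) (n : nat) (K : dcx n).

Definition facet : rel (simp K) := fun t s =>
  (0 < sdim t)%N && [exists j : 'I_(sdim t).+1, face t j == s].

Definition proper_face (s t : simp K) : bool :=
  [exists u, facet t u && connect facet u s].

Definition dcx_axioms : Prop :=
  [/\
      forall (s : simp K) j, (0 < sdim s)%N -> (j <= sdim s)%N ->
        sdim (face s j) = (sdim s).-1,
      forall (s : simp K) i j, (1 < sdim s)%N -> (i < j)%N -> (j <= sdim s)%N ->
        face (face s j) i = face (face s i) j.-1,
      forall s : simp K, (tmin s < tmax s)%N /\ (tmax s <= n)%N,
      (* each K_i is a subcomplex *)
      forall (i : nat) s t, proper_face s t ->
        (tmin t <= i <= tmax t)%N -> (tmin s <= i <= tmax s)%N &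
      forall s t, proper_face s t ->
        [/\ (tmin s < tmin t)%N, (tmin t < tmax t)%N & (tmax t < tmax s)%N]].

(** Cells of the prism: (s, i, false) = s x {i}, (s, i, true) = s x [i,i+1]. *)
Definition cell := (simp K * 'I_n.+1 * bool)%type.
HB.instance Definition _ := Finite.on cell.

Definition valid (x : cell) : bool :=
  let: (s, i, h) := x in
  if h then (tmin s <= i < tmax s)%N else (tmin s <= i <= tmax s)%N.

Definition cdim (x : cell) : nat := (sdim x.1.1 + x.2)%N.

(* cellular chains (all degrees at once) with coefficients in F *)
Local Notation chain := {ffun cell -> F}.

Definition delta (y : cell) : chain :=
  [ffun x => if valid y && (x == y) then 1 else 0].

Definition scl (a : F) (v : chain) : chain := [ffun x => a * v x].

Definition bd_cell (x : cell) : chain :=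
  let: (s, i, h) := x in
  let fs := if (0 < sdim s)%N then
              \sum_(j < (sdim s).+1) scl ((-1) ^+ j) (delta (face s j, i, h))
            else 0 in
  if h then fs + scl ((-1) ^+ (sdim s)) (delta (s, inord i.+1, false) - delta (s, i, false))
  else fs.

Definition bdry (c : chain) : chain := \sum_(x | valid x) scl (c x) (bd_cell x).

(** Subcomplex \hat K_i^j : cells s x T with T inside [i,j]. *)
Definition inK (i j : int) : pred cell := fun x =>
  let: (s, t, h) := x in
  [&& valid x, (i <= Posz t) & (Posz (t + h) <= j)].

Definition pair := (pred cell * pred cell)%type.

Definition KCC (b d : int) : pair := (inK b d, fun _ => false).
Definition KOC (b d : int) : pair := (inK (-1) d, inK (-1) b).
Definition KCO (b d : int) : pair := (inK b (Posz n + 1), inK d (Posz n + 1)).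
Definition KOO (b d : int) : pair :=
  (inK (-1) (Posz n + 1), (fun x => inK (-1) b x || inK d (Posz n + 1) x)).

Definition relcycle (p : nat) (P : pair) (z : chain) : Prop :=
  (forall x, z x != 0 -> P.1 x /\ cdim x = p) /\
  (forall x, bdry z x != 0 -> P.2 x).

Definition relbdry (p : nat) (P : pair) (w : chain) : Prop :=
  exists e a : chain,
    [/\ forall x, e x != 0 -> P.1 x /\ cdim x = p.+1,
        forall x, a x != 0 -> P.2 x &
        w = bdry e + a].

(* the class [z] in H_p(P) lies in the image of H_p(P') -> H_p(P) induced by inclusion *)
Definition in_image (p : nat) (P' P : pair) (z : chain) : Prop :=
  exists z' : chain, relcycle p P' z' /\ relbdry p P (z - z').

End Defs.

Notation chain F K := {ffun cell K -> F%type}.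

(* Main.v *)
Require Import Defs.
From HB Require Import structures.
From mathcomp Require Import all_boot all_order all_algebra zify.
Import GRing.Theory Num.Theory.
Local Open Scope ring_scope.

Set Implicit Arguments. Unset Strict Implicit. Unset Printing Implicit Defensive.

Section L.
Variables (F : fieldType) (n : nat) (K : dcx n).
Implicit Types (c : chain F K).

Lemma deltaE (y x : cell K) : @delta F n K y x = if valid y && (x == y) then 1 else 0.
Proof. by rewrite ffunE. Qed.

Lemma bdryE c y : bdry c y = \sum_(x | valid x) c x * bd_cell F x y.
Proof. rewrite /bdry sum_ffunE; apply: eq_bigr => x _; by rewrite ffunE. Qed.

Lemma bdry_zero c y : (forall x, valid x -> bd_cell F x y != 0 -> c x = 0) -> bdry c y = 0.
Proof.
move=> H; rewrite bdryE; apply: big1 => x vx.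
case: (eqVneq (bd_cell F x y) 0) => [->|nz]; first by rewrite mulr0.
by rewrite (H x vx nz) mul0r.
Qed.

Lemma fs_supp (u : simp K) (i : 'I_n.+1) h y :
  (if (0 < sdim u)%N then
     \sum_(j < (sdim u).+1) scl ((-1) ^+ j) (@delta F n K (face u j, i, h))
   else 0) y != 0 -> exists2 s, y = (s, i, h) & facet u s.
Proof.
case: ifP => hu; last by rewrite ffunE eqxx.
rewrite sum_ffunE => nz.
have [j _ ] : exists2 j : 'I_(sdim u).+1, true & scl ((-1) ^+ j) (@delta F n K (face u j, i, h)) y != 0.
  apply/exists_inP; apply: contraR nz => /exists_inPn H.
  by apply/eqP; apply: big1 => j _; apply/eqP/negbNE/H.
rewrite ffunE deltaE; case: ifP => [/andP[_ /eqP ->] _|]; last by rewrite mulr0 eqxx.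
exists (face u j) => //; rewrite /facet hu /=; apply/existsP; exists j; exact: eqxx.
Qed.


Lemma bd_supp (u : simp K) (i : 'I_n.+1) h y :
  bd_cell F (u, i, h) y != 0 ->
  (exists2 s, y = (s, i, h) & facet u s) \/
  (h /\ (y = (u, i, false) \/ y = (u, inord i.+1, false))).
Proof.
rewrite /bd_cell; case: h.
  rewrite ffunE; set f := (X in X y + _).
  case: (eqVneq (f y) 0) => [->|nz]; last by move=> _; left; exact: fs_supp nz.
  rewrite add0r !ffunE.
  case: (eqVneq y (u, i, false)) => [->|ne1]; first by right; split=> //; left.
  case: (eqVneq y (u, inord i.+1, false)) => [->|ne2]; first by right; split=> //; right.
  by rewrite !andbF subrr mulr0 eqxx.
by move=> nz; left; exact: fs_supp nz.
Qed.

Lemma facet_int (HK : dcx_axioms K) (u s : simp K) : facet u s ->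
  (tmin s < tmin u)%N /\ (tmax u < tmax s)%N.
Proof.
case: HK => _ _ _ _ H5 fus.
have : proper_face s u by apply/existsP; exists s; rewrite fus connect0.
by case/H5 => a _ c.
Qed.


Lemma eq0_contra {a : F} {P : Prop} : (a != 0 -> P) -> ~ P -> a = 0.
Proof. by move=> H nP; apply/eqP; apply: contraT => /H. Qed.

Lemma caseA p (P' P : pair K) (z : chain F K) (y : cell K) :
  in_image p P' P z -> ~ P'.1 y -> ~ P.2 y ->
  (forall x, valid x -> bd_cell F x y != 0 -> ~ P.1 x) -> z y = 0.
Proof.
move=> [z' [[hz' _] [e [a [he ha eq]]]]] n1 n2 H.
have zE : z = (z - z') + z' by rewrite subrK.
rewrite zE eq !ffunE.
rewrite (eq0_contra (fun h => (hz' y h).1) n1) (eq0_contra (ha y) n2) !addr0.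
apply: bdry_zero => x vx nz; apply: (eq0_contra (fun h => (he x h).1)); exact: H.
Qed.

Lemma caseB p (P' P : pair K) (z : chain F K) (y : cell K) :
  in_image p P' P z -> ~ P'.2 y ->
  (forall x, valid x -> bd_cell F x y != 0 -> ~ P.2 x) ->
  (forall x, valid x -> bd_cell F x y != 0 ->
     forall x', valid x' -> bd_cell F x' x != 0 -> ~ P.1 x') ->
  bdry z y = 0.
Proof.
move=> [z' [[_ hz'] [e [a [he ha eq]]]]] n1 H1 H2.
have zE : z = (z - z') + z' by rewrite subrK.
have -> : bdry z y = bdry (bdry e) y + bdry a y + bdry z' y.
  rewrite !bdryE -!big_split /=; apply: eq_bigr => x _.
  by rewrite zE eq !ffunE !mulrDl.
rewrite (eq0_contra (hz' y) n1) addr0.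
rewrite (@bdry_zero a); last first.
  by move=> x vx nz; apply: (eq0_contra (ha x)); exact: H1.
rewrite addr0; apply: bdry_zero => x vx nz; apply: bdry_zero => x' vx' nz'.
apply: (eq0_contra (fun h => (he x' h).1)); exact: H2 nz _ vx' nz'.
Qed.


Lemma bd_supp' (HK : dcx_axioms K) (u : simp K) (i : 'I_n.+1) h y :
  valid (u, i, h) -> bd_cell F (u, i, h) y != 0 ->
  (exists2 s, y = (s, i, h) & facet u s) \/
  (h = true /\ exists j : 'I_n.+1, y = (u, j, false) /\ (j = i :> nat \/ j = i.+1 :> nat)).
Proof.
move=> vx /bd_supp [H|[hh [E|E]]]; [by left| right; split => //; exists i; by auto|].
right; split=> //; exists (inord i.+1); split=> //; right; rewrite inordK //.
case: HK => _ _ /(_ u) [_ hu] _ _; move: vx; rewrite /valid hh => /andP[_ h2].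
by rewrite ltnS (leq_trans h2 hu).
Qed.

End L.

Ltac clean :=
  repeat match goal with H : is_true (valid _) |- _ => move: H end;
  unfold inK, valid; simpl; lia.

Ltac vcase HK :=
  let u := fresh "u" in let i := fresh "i" in let h := fresh "h" in
  let vx := fresh "vx" in let E := fresh "E" in let s' := fresh "s" in
  let fus := fresh "fus" in let j := fresh "j" in let Ej := fresh "Ej" in
  move=> [[u i] h] vx /(bd_supp' HK vx) [[s' E /(facet_int HK) [? ?]] | [? [j [E Ej]]]];
  injection E; repeat match goal with |- _ = _ -> _ => intro end; subst.

Ltac solA H Himg HK := apply: (negP H); apply/eqP; apply: (caseA Himg);
  [clean | clean | vcase HK; try clean; vcase HK; clean].
Ltac solB H Himg HK := apply: (negP H); apply/eqP; apply: (caseB Himg);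
  [clean | vcase HK; clean | vcase HK; try clean; vcase HK; clean].

Unset Implicit Arguments.
Theorem theorem5p3 (F : fieldType) (n : nat) (K : dcx n) (HK : dcx_axioms K)
    (b d p : nat) (hbd : (b < d)%N) (hdn : (d <= n)%N) :
  [/\
   (* (1) *)
   forall (z : chain F K) (s t : simp K) (ib id : 'I_n.+1),
     nat_of_ord ib = b -> nat_of_ord id = d ->
     relcycle p (KOC K (Posz b) (Posz d)) z ->
     tmin t = d -> z (t, id, false) != 0 ->
     tmin s = b -> bdry z (s, ib, false) != 0 ->
     ~ in_image p (KOC K (Posz b - 1) (Posz d)) (KOC K (Posz b) (Posz d)) z /\
     ~ in_image p (KOC K (Posz b) (Posz d - 1)) (KOC K (Posz b) (Posz d)) z,
   (* (2) *)
   forall (z : chain F K) (s t : simp K) (ib id : 'I_n.+1),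
     nat_of_ord ib = b -> nat_of_ord id = d ->
     relcycle p (KCO K (Posz b) (Posz d)) z ->
     tmax t = b -> z (t, ib, false) != 0 ->
     tmax s = d -> bdry z (s, id, false) != 0 ->
     ~ in_image p (KCO K (Posz b + 1) (Posz d)) (KCO K (Posz b) (Posz d)) z /\
     ~ in_image p (KCO K (Posz b) (Posz d + 1)) (KCO K (Posz b) (Posz d)) z,
   (* (3) *)
   forall (z : chain F K) (s t : simp K) (ib id : 'I_n.+1),
     nat_of_ord ib = b -> nat_of_ord id = d ->
     relcycle p (KCC K (Posz b) (Posz d)) z ->
     tmax s = b -> z (s, ib, false) != 0 ->
     tmin t = d -> z (t, id, false) != 0 ->
     ~ in_image p (KCC K (Posz b + 1) (Posz d)) (KCC K (Posz b) (Posz d)) z /\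
     ~ in_image p (KCC K (Posz b) (Posz d - 1)) (KCC K (Posz b) (Posz d)) z &
   (* (4) *)
   forall (z : chain F K) (s t : simp K) (ib id : 'I_n.+1),
     nat_of_ord ib = b -> nat_of_ord id = d ->
     relcycle p (KOO K (Posz b) (Posz d)) z ->
     tmin s = b -> bdry z (s, ib, false) != 0 ->
     tmax t = d -> bdry z (t, id, false) != 0 ->
     ~ in_image p (KOO K (Posz b - 1) (Posz d)) (KOO K (Posz b) (Posz d)) z /\
     ~ in_image p (KOO K (Posz b) (Posz d + 1)) (KOO K (Posz b) (Posz d)) z].
Proof.
split.
- move=> z s t ib id eb ed _ ht zt hs bz; split => Himg.
  + solB bz Himg HK.
  + solA zt Himg HK.
- move=> z s t ib id eb ed _ ht zt hs bz; split => Himg.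
  + solA zt Himg HK.
  + solB bz Himg HK.
- move=> z s t ib id eb ed _ hs zs ht zt; split => Himg.
  + solA zs Himg HK.
  + solA zt Himg HK.
- move=> z s t ib id eb ed _ hs bs ht bt; split => Himg.
  + solB bs Himg HK.
  + solB bt Himg HK.
Qed.
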